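(* Let $\mathcal{S}$ be a countably intersected family of subsets of a set $\Gamma$ and let $s_1,\dots,s_n\in\mathcal{S}$. Then there exists a pairwise disjoint family $t_1,\dots,t_l\in\mathcal{S}$ such that each $t_j$ is contained in some $s_i$ and $\bigcup_{i=1}^n s_i=\bigcup_{j=1}^l t_j$.
   Context: A family $\mathcal{S}$ of subsets of $\Gamma$ is countably intersected (C.I.) if: (a) $\mathcal{S}$ consists of countable subsets of $\Gamma$, contains all singletons, and is pointwise closed, i.e. $\{\chi_s : s\in\mathcal{S}\}$ is closed in $\{0,1\}^{\Gamma}$; (b) for all $s,t\in\mathcal{S}$, the set $s\setminus t$ is a finite union of pairwise disjoint elements of $\mathcal{S}$; (c) to every $t\in\mathcal{S}$ one can assign $s_t\in\mathcal{S}$ with $t\subseteq s_t$ such that for all $s,t_1,\dots,t_n\in\mathcal{S}$ there exists $t\in\mathcal{S}$ with $t\subseteq s\setminus\bigcup_{i=1}^n s_{t_i}$ and $s\setminus\big(\bigcup_{i=1}^n s_{t_i}\cup t\big)$ finite; (d) for every $s\in\mathcal{S}$ the set $\{s\cap t: t\in\mathcal{S}\}$ is countable. *)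

(* Defs.v *)
From Stdlib Require Import List.
Import ListNotations.

Definition subset {T : Type} (A B : T -> Prop) : Prop := forall x, A x -> B x.

Definition countable_set {X : Type} (A : X -> Prop) : Prop :=
  exists f : X -> nat, forall x y, A x -> A y -> f x = f y -> x = y.

Definition list_union {G : Type} (l : list (G -> Prop)) : G -> Prop :=
  fun x => exists t, In t l /\ t x.

Definition pairwise_disjoint {G : Type} (l : list (G -> Prop)) : Prop :=
  forall i j, i < length l -> j < length l -> i <> j ->
    forall x, nth i l (fun _ => False) x -> nth j l (fun _ => False) x -> False.

(* {chi_s : s in S} is closed in {0,1}^Gamma (product topology):
   any A whose restriction to every finite set of points is matched by
   some member of S belongs to S. *)
Definition pointwise_closed {G : Type} (S : (G -> Prop) -> Prop) : Prop :=
  forall A : G -> Prop,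
    (forall F : list G, exists s, S s /\ forall x, In x F -> (s x <-> A x)) ->
    S A.

Definition set_eq {G : Type} (A B : G -> Prop) : Prop := forall x, A x <-> B x.

Definition countably_intersected {G : Type} (S : (G -> Prop) -> Prop) : Prop :=
  (forall s, S s -> countable_set s) /\
  (forall g : G, S (fun x => x = g)) /\
  pointwise_closed S /\
  (forall s t, S s -> S t ->
     exists l : list (G -> Prop), (forall u, In u l -> S u) /\ pairwise_disjoint l /\
       set_eq (fun x => s x /\ ~ t x) (list_union l)) /\
  (exists st : (G -> Prop) -> (G -> Prop),
     (forall t, S t -> S (st t) /\ subset t (st t)) /\
     forall s (ts : list (G -> Prop)), S s -> (forall t, In t ts -> S t) ->
       exists t, S t /\
         subset t (fun x => s x /\ ~ list_union (map st ts) x) /\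
         exists F : list G, forall x,
           (s x /\ ~ list_union (map st ts) x /\ ~ t x) -> In x F) /\
  (forall s, S s ->
     exists e : nat -> (G -> Prop),
       forall t, S t -> exists n, set_eq (e n) (fun x => s x /\ t x)).

(* Main.v *)
Require Import Defs.
From Stdlib Require Import List Classical Lia.
Import ListNotations.

Inductive PD {G : Type} : list (G -> Prop) -> Prop :=
| PD_nil : PD []
| PD_cons : forall a l, PD l -> (forall b, In b l -> forall x, a x -> b x -> False) -> PD (a :: l).

Lemma PD_pd {G : Type} (l : list (G -> Prop)) : PD l -> pairwise_disjoint l.
Proof.
  induction 1; intros i j Hi Hj Hij x Hx1 Hx2; simpl in *.
  - lia.
  - destruct i as [|i], j as [|j].
    + congruence.
    + apply (H0 (nth j l (fun _ => False))) with x; auto. apply nth_In; lia.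
    + apply (H0 (nth i l (fun _ => False))) with x; auto. apply nth_In; lia.
    + apply (IHPD i j) with x; auto; lia.
Qed.

Lemma pd_PD {G : Type} (l : list (G -> Prop)) : pairwise_disjoint l -> PD l.
Proof.
  induction l as [|a l IH]; intro H; constructor.
  - apply IH. intros i j Hi Hj Hij x H1 H2.
    apply (H (S i) (S j)) with x; simpl; auto; lia.
  - intros b Hb x Ha Hbx. destruct (In_nth l b (fun _ => False) Hb) as [n [Hn Hnb]].
    apply (H 0 (S n)) with x; simpl; try lia; auto. rewrite Hnb; auto.
Qed.

Lemma PD_app {G : Type} (l1 l2 : list (G -> Prop)) : PD l1 -> PD l2 ->
  (forall a b, In a l1 -> In b l2 -> forall x, a x -> b x -> False) -> PD (l1 ++ l2).
Proof.
  induction 1; intros H2 H3; simpl; auto.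
  constructor.
  - apply IHPD; auto. intros a0 b0 Ha0 Hb0 x0; apply (H3 a0 b0); auto; right; auto.
  - intros b Hb x Ha Hbx. apply in_app_or in Hb as [Hb|Hb].
    + eapply H0; eauto.
    + apply (H3 a b) with x; auto. left; auto.
Qed.

Section S.
Variable G : Type.
Variable S : (G -> Prop) -> Prop.
Hypothesis Hb : forall s t, S s -> S t ->
     exists l : list (G -> Prop), (forall u, In u l -> S u) /\ pairwise_disjoint l /\
       set_eq (fun x => s x /\ ~ t x) (list_union l).

Lemma step (us : list (G -> Prop)) (t : G -> Prop) : PD us -> (forall u, In u us -> S u) -> S t ->
  exists l, PD l /\ (forall v, In v l -> S v) /\
    (forall v, In v l -> exists u, In u us /\ subset v u) /\
    set_eq (list_union l) (fun x => list_union us x /\ ~ t x).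
Proof.
  induction 1 as [|u us Hus IH Hdis]; intros HS Ht.
  - exists []. split; [constructor|]. unfold set_eq, list_union; simpl; firstorder.
  - destruct IH as [l [H1 [H2 [H3 H4]]]]; auto. intros; apply HS; right; auto.
    destruct (Hb u t) as [lu [K1 [K2 K3]]]; auto. apply HS; left; auto.
    exists (lu ++ l). split; [|split; [|split; [|intro x; split]]].
    + apply PD_app; auto. apply pd_PD; auto.
      intros a b Ha Hb' x Hax Hbx.
      assert (Hux : u x /\ ~ t x) by (apply K3; exists a; auto). 
      destruct (H3 b Hb') as [u' [Hu' Hsub]].
      eapply Hdis; eauto. tauto.
    + intros v Hv; apply in_app_or in Hv as [Hv|Hv]; auto.
    + intros v Hv; apply in_app_or in Hv as [Hv|Hv].
      * exists u; split; [left; auto|]. intros x Hx.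
        assert (u x /\ ~ t x) by (apply K3; exists v; auto). tauto.
      * destruct (H3 v Hv) as [u' [? ?]]. exists u'; split; auto; right; auto.
    + intros [v [Hv Hvx]]. apply in_app_or in Hv as [Hv|Hv].
      * assert (u x /\ ~ t x) by (apply K3; exists v; auto).
        split; [exists u; split; [left; auto | tauto] | tauto].
      * assert (list_union us x /\ ~ t x) by (apply H4; exists v; auto).
        destruct H as [[w [? ?]] ?]. split; auto. exists w; split; auto; right; auto.
    + intros [[w [[Hw|Hw] Hwx]] Htx].
      * subst w. destruct (proj1 (K3 x) (conj Hwx Htx)) as [v [? ?]].
        exists v; split; auto; apply in_or_app; auto.
      * destruct (proj2 (H4 x) (conj (ex_intro _ w (conj Hw Hwx)) Htx)) as [v [? ?]].
        exists v; split; auto; apply in_or_app; auto.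
Qed.

Lemma diff (s : G -> Prop) (ts : list (G -> Prop)) : S s -> (forall t, In t ts -> S t) ->
  exists l, PD l /\ (forall v, In v l -> S v) /\ (forall v, In v l -> subset v s) /\
    set_eq (list_union l) (fun x => s x /\ ~ list_union ts x).
Proof.
  intro Hs. induction ts as [|t ts IH]; intro HT.
  - exists [s]. split; [|split; [|split; [|intro x; split]]].
    + constructor. constructor. intros b [].
    + intros v [<-|[]]; auto.
    + intros v [<-|[]]; intros y; auto.
    + intros [v [[<-|[]] ?]]; split; auto. intros [v [[] _]].
    + intros [? _]. exists s; split; auto. left; auto.
  - destruct IH as [l [H1 [H2 [H3 H4]]]]. intros; apply HT; right; auto.
    destruct (step l t) as [l' [K1 [K2 [K3 K4]]]]; auto. apply HT; left; auto.
    exists l'. split; [auto|split; [auto|split; [|intro x; split]]].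
    + intros v Hv x Hx. destruct (K3 v Hv) as [u [? ?]]. apply (H3 u); auto.
    + intros Hx. apply K4 in Hx as [Hx Hnt]. apply H4 in Hx as [? Hn]. split; auto.
      intros [w [[<-|Hw] Hwx]]; auto. apply Hn; exists w; auto.
    + intros [Hsx Hn]. apply K4. split.
      * apply H4. split; auto. intros [w [? ?]]; apply Hn; exists w; split; auto; right; auto.
      * intro; apply Hn; exists t; split; auto; left; auto.
Qed.
End S.

Theorem lemma1p3 (G : Type) (S : (G -> Prop) -> Prop)
  (HS : countably_intersected S) (ss : list (G -> Prop))
  (Hss : forall s, In s ss -> S s) :
  exists ts : list (G -> Prop),
    (forall t, In t ts -> S t) /\
    pairwise_disjoint ts /\
    (forall t, In t ts -> exists s, In s ss /\ subset t s) /\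
    set_eq (list_union ss) (list_union ts).
Proof.
  destruct HS as [_ [_ [_ [Hb _]]]].
  cut (exists ts, (forall t, In t ts -> S t) /\ PD ts /\
    (forall t, In t ts -> exists s, In s ss /\ subset t s) /\
    set_eq (list_union ss) (list_union ts)).
  { intros [ts [A [B C]]]. exists ts; split; auto. split; [apply PD_pd|]; tauto. }
  induction ss as [|s rest IH].
  - exists []. split; [|split; [constructor|]]; unfold set_eq, list_union; simpl; firstorder.
  - destruct IH as [ts' [H1 [H2 [H3 H4]]]]. intros; apply Hss; right; auto.
    destruct (diff G S Hb s ts') as [l [K1 [K2 [K3 K4]]]]; auto. apply Hss; left; auto.
    exists (l ++ ts'). split; [|split; [|split; [|intro x; split]]].
    + intros v Hv; apply in_app_or in Hv as [Hv|Hv]; auto.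
    + apply PD_app; auto. intros a b Ha Hb' x Hax Hbx.
      assert (Hx : list_union l x) by (exists a; auto).
      apply K4 in Hx as [_ Hn]. apply Hn; exists b; auto.
    + intros v Hv; apply in_app_or in Hv as [Hv|Hv].
      * exists s; split; [left|]; auto.
      * destruct (H3 v Hv) as [u [? ?]]; exists u; split; auto; right; auto.
    + intros [w [[<-|Hw] Hwx]].
      * destruct (classic (list_union ts' x)) as [[v [? ?]]|Hn].
        -- exists v; split; auto; apply in_or_app; auto.
        -- destruct (proj2 (K4 x) (conj Hwx Hn)) as [v [? ?]].
           exists v; split; auto; apply in_or_app; auto.
      * destruct (proj1 (H4 x) (ex_intro _ w (conj Hw Hwx))) as [v [? ?]].
        exists v; split; auto; apply in_or_app; auto.
    + intros [v [Hv Hvx]]. apply in_app_or in Hv as [Hv|Hv].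
      * exists s; split; [left|]; auto. apply (K3 v); auto.
      * destruct (proj2 (H4 x) (ex_intro _ v (conj Hv Hvx))) as [w [? ?]].
        exists w; split; auto; right; auto.
Qed.
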